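(* Let $e$ be a directed edge of $\Gamma$ labeled $y$, not on $T$, from $g$ to $g'=gy$. Write $\gamma=\mathrm{nf}(g)=x^{i_n}y^{\epsilon_n}\cdots x^{i_1}y^{\epsilon_1}x^{i_0}$ (so $n\ge1$, $i_0\ge1$), let $s_k=i_k+i_{k-1}+\cdots+i_0$ for $0\le k\le n$, and let $m=\min\{k\mid s_k\le0\}$ if this set is nonempty, and $m=n$ otherwise. Then $m\ge1$ and: (1) If $m=n$ or $s_m\neq0$ or $\epsilon_{m+1}=1$, then $\gamma'=\mathrm{nf}(\gamma y)=x^{i_n}y^{\epsilon_n}\cdots x^{i_{m+1}}y^{\epsilon_{m+1}}x^{s_m}yx^{-s_{m-1}-1}y^{\epsilon_m}x^{i_{m-1}}y^{\epsilon_{m-1}}\cdots x^{i_1}y^{\epsilon_1}x^{i_0+1}$. (2) Otherwise, if $m<n$, $s_m=0$ and $\epsilon_{m+1}=-1$, then $\gamma'=\mathrm{nf}(\gamma y)=x^{i_n}y^{\epsilon_n}\cdots x^{i_{m+2}}y^{\epsilon_{m+2}}x^{i_{m+1}+i_m-1}y^{\epsilon_m}x^{i_{m-1}}y^{\epsilon_{m-1}}\cdots x^{i_1}y^{\epsilon_1}x^{i_0+1}$. In each case there is a sequence of $\Sigma$-rewritings from $\gamma y$ to $\gamma'$ in which no $y^{-1}$-rules are used and exactly $m$ $y$-rules are used, whose sizes, in the order used, are $s_0,s_1,\dots,s_{m-1}$.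
   Context: $F$ is Thompson's group with generators $x,y$, $A=\{x^{\pm1},y^{\pm1}\}$, $\Gamma$ its Cayley graph over $A$. Guba–Sapir's convergent rewriting system $\Sigma$ consists of free reductions $aa^{-1}\to\emptyset$ ($a\in A$), the $y$-rules of size $i$: $y^\epsilon x^iy\to x^iyx^{-i-1}y^\epsilon x^{i+1}$, and the $y^{-1}$-rules of size $i$: $y^\epsilon x^{i+1}y^{-1}\to x^{i+1}y^{-1}x^{-i}y^\epsilon x^i$ ($\epsilon\in\{1,-1\}$, $i\ge1$); rewriting may be applied to any subword. $\mathcal N$ is the set of $\Sigma$-irreducible words (unique normal forms for $F$), and $\mathrm{nf}(w)$ denotes the word of $\mathcal N$ representing the same element as $w$. $T$ is the subtree of $\Gamma$ whose non-backtracking paths from the identity are labeled exactly by the words of $\mathcal N$. *)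

(* Defs.v *)
From HB Require Import structures.
From mathcomp Require Import all_boot all_algebra.
Set Implicit Arguments. Unset Strict Implicit. Unset Printing Implicit Defensive.
Import GRing.Theory Num.Theory.
Local Open Scope ring_scope.

Inductive letter := X | Xi | Y | Yi.

Definition letter_eqb (a b : letter) : bool :=
  match a, b with
  | X, X | Xi, Xi | Y, Y | Yi, Yi => true | _, _ => false end.
Lemma letter_eqP : Equality.axiom letter_eqb.
Proof. by case; case; constructor. Qed.
HB.instance Definition _ := hasDecEq.Build letter letter_eqP.

Definition inv (a : letter) : letter :=
  match a with X => Xi | Xi => X | Y => Yi | Yi => Y end.

Definition word := seq letter.

Definition xpow (k : int) : word :=
  match k with Posz n => nseq n X | Negz n => nseq n.+1 Xi end.

(* y^eps, with eps = true meaning +1 and eps = false meaning -1 *)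
Definition ypow (e : bool) : letter := if e then Y else Yi.

(* ---------- Thompson's group F ----------
   F = < x, y | [x y^-1, x^-1 y x], [x y^-1, x^-2 y x^2] >,
   with [a,b] = a^-1 b^-1 a b. *)
Definition rel1 : word :=
  [:: Y; Xi] ++ [:: Xi; Yi; X] ++ [:: X; Yi] ++ [:: Xi; Y; X].
Definition rel2 : word :=
  [:: Y; Xi] ++ [:: Xi; Xi; Yi; X; X] ++ [:: X; Yi] ++ [:: Xi; Xi; Y; X; X].

Inductive fequiv : word -> word -> Prop :=
  | fe_free u v a : fequiv (u ++ [:: a; inv a] ++ v) (u ++ v)
  | fe_rel1 u v : fequiv (u ++ rel1 ++ v) (u ++ v)
  | fe_rel2 u v : fequiv (u ++ rel2 ++ v) (u ++ v)
  | fe_refl u : fequiv u u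
  | fe_sym u v : fequiv u v -> fequiv v u
  | fe_trans u v w : fequiv u v -> fequiv v w -> fequiv u w.

Inductive rule := Free | YRule of int | YinvRule of int.

Inductive rule_lr : rule -> word -> word -> Prop :=
  | lr_free a : rule_lr Free [:: a; inv a] [::]
  | lr_y (e : bool) (i : int) : 1 <= i ->
      rule_lr (YRule i) (ypow e :: xpow i ++ [:: Y])
              (xpow i ++ [:: Y] ++ xpow (- i - 1) ++ [:: ypow e] ++ xpow (i + 1))
  | lr_yinv (e : bool) (i : int) : 1 <= i ->
      rule_lr (YinvRule i) (ypow e :: xpow (i + 1) ++ [:: Yi])
              (xpow (i + 1) ++ [:: Yi] ++ xpow (- i) ++ [:: ypow e] ++ xpow i).

Inductive step : word -> rule -> word -> Prop :=
  | step_intro r l rh u v : rule_lr r l rh -> step (u ++ l ++ v) r (u ++ rh ++ v).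

Inductive derives : word -> seq rule -> word -> Prop :=
  | der_nil w : derives w [::] w
  | der_cons w r w' ls w'' : step w r w' -> derives w' ls w'' -> derives w (r :: ls) w''.

Definition irreducible (w : word) : Prop := forall r w', ~ step w r w'.

Definition is_nf (w v : word) : Prop := irreducible v /\ fequiv v w.

Definition yrule_sizes (ls : seq rule) : seq int :=
  pmap (fun r => if r is YRule k then Some k else None) ls.
Definition no_yinv_rule (ls : seq rule) : bool :=
  all (fun r => if r is YinvRule _ then false else true) ls.

(* ---------- the tree T ----------
   The edge of the Cayley graph from the element represented by g with label a
   lies on T iff some non-backtracking path from the identity labelled by a
   word w of N traverses it (in either direction): w = u ++ b :: v where the
   prefix u ends at g and b = a, or u ends at g a and b = a^-1. *)
Definition edge_on_T (g : word) (a : letter) : Prop :=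
  exists w u b v, irreducible w /\ w = u ++ b :: v /\
    ((fequiv u g /\ b = a) \/ (fequiv u (g ++ [:: a]) /\ b = inv a)).

(* W n a b = x^{a n} y^{b n} x^{a (n-1)} ... x^{a 1} y^{b 1} x^{a 0} *)
Definition W (n : nat) (a : nat -> int) (b : nat -> bool) : word :=
  xpow (a n) ++ flatten [seq ypow (b k) :: xpow (a k.-1) | k <- rev (iota 1 n)].

Definition psum (i : nat -> int) (k : nat) : int := \sum_(0 <= j < k.+1) i j.

Definition mindex (n : nat) (i : nat -> int) : nat :=
  head n [seq k <- iota 0 n.+1 | psum i k <= 0].

(* exponents/signs of the word in case (1):
   x^{i_n} y^{e_n} ... x^{i_{m+1}} y^{e_{m+1}} x^{s_m} y x^{-s_{m-1}-1}
     y^{e_m} x^{i_{m-1}} ... x^{i_1} y^{e_1} x^{i_0+1}   (n+1 y-letters) *)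
Definition a1 (n : nat) (i : nat -> int) (k : nat) : int :=
  let m := mindex n i in
  if k == 0%N then i 0%N + 1
  else if (k < m)%N then i k
  else if k == m then - psum i m.-1 - 1
  else if k == m.+1 then psum i m
  else i k.-1.
Definition b1 (n : nat) (i : nat -> int) (eps : nat -> bool) (k : nat) : bool :=
  let m := mindex n i in
  if (k <= m)%N then eps k else if k == m.+1 then true else eps k.-1.

(* exponents/signs of the word in case (2):
   x^{i_n} y^{e_n} ... x^{i_{m+2}} y^{e_{m+2}} x^{i_{m+1}+i_m-1}
     y^{e_m} x^{i_{m-1}} ... x^{i_1} y^{e_1} x^{i_0+1}   (n-1 y-letters) *)
Definition a2 (n : nat) (i : nat -> int) (k : nat) : int :=
  let m := mindex n i in
  if k == 0%N then i 0%N + 1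
  else if (k < m)%N then i k
  else if k == m then i m.+1 + i m - 1
  else i k.+1.
Definition b2 (n : nat) (i : nat -> int) (eps : nat -> bool) (k : nat) : bool :=
  let m := mindex n i in
  if (k <= m)%N then eps k else eps k.+1.

(* Main.v *)
Require Import Defs.
From mathcomp Require Import all_boot all_algebra zify.
From Stdlib Require Import Setoid Morphisms.
Import GRing.Theory Num.Theory.
Local Open Scope ring_scope.

Lemma nseqS' (T : Type) k (c : T) : nseq k.+1 c = nseq k c ++ [:: c].
Proof. by rewrite -addn1 nseqD. Qed.

Lemma cancel_nseq k (c : letter) : derives (nseq k c ++ nseq k (Defs.inv c)) (nseq k Free) [::].
Proof.
elim: k => [|k IH]; first by constructor.
rewrite nseqS' /= -catA.
econstructor; last exact: IH.
have := step_intro (nseq k c) (nseq k (Defs.inv c)) (lr_free c). by [].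
Qed.

Lemma W_S n a b : W n.+1 a b = xpow (a n.+1) ++ ypow (b n.+1) :: W n a b.
Proof. by rewrite /W -addn1 iotaD rev_cat /= add1n /= addn1 add0n. Qed.
Lemma W0 a b : W 0 a b = xpow (a 0%N).
Proof. by rewrite /W /= cats0. Qed.

Lemma W_ext n a b a' b' : (forall j, (j <= n)%N -> a j = a' j /\ b j = b' j) ->
  W n a b = W n a' b'.
Proof.
elim: n => [|n IH] H; first by rewrite !W0; case: (H 0%N (leqnn _)) => ->.
rewrite !W_S; case: (H n.+1 (leqnn _)) => -> ->; rewrite IH //.
by move=> j hj; apply: H; rewrite (leq_trans hj).
Qed.

Fixpoint PreW (N k : nat) (a : nat -> int) (b : nat -> bool) : word :=
  match N with 0 => [::] | N'.+1 =>
   if (N'.+1 <= k)%N then [::] else xpow (a N'.+1) ++ ypow (b N'.+1) :: PreW N' k a b end.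

Lemma W_pre N k a b : (k <= N)%N -> W N a b = PreW N k a b ++ W k a b.
Proof.
elim: N => [|N IH] hk; first by move: hk; rewrite leqn0 => /eqP->.
rewrite /=; case: ifP => h; first by have -> : k = N.+1 by apply/eqP; rewrite eqn_leq h hk.
rewrite W_S IH; last lia. by rewrite -!catA.
Qed.

Lemma PreW_nn N a b : PreW N N a b = [::].
Proof. by case: N => //= N; rewrite leqnn. Qed.

Lemma PreW_step N k a b : (k < N)%N ->
  PreW N k a b = PreW N k.+1 a b ++ xpow (a k.+1) ++ [:: ypow (b k.+1)].
Proof.
elim: N => [|N IH] hk //=.
case: (ltngtP k N) => h.
- rewrite ?ifF; try lia. by rewrite IH // -catA.
- lia.
- by subst k; rewrite ?ifT ?PreW_nn.
Qed.

Lemma PreW_ext N k a b a' b' : (forall j, (k < j <= N)%N -> a j = a' j /\ b j = b' j) ->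
  PreW N k a b = PreW N k a' b'.
Proof.
elim: N => [|N IH] H //=; case: ifP => h //.
case: (H N.+1); first lia. move=> -> ->; rewrite IH //.
move=> j hj; apply: H; lia.
Qed.

Lemma PreW_shift N k a b :
  PreW N.+1 k.+1 a b = PreW N k (fun j => a j.+1) (fun j => b j.+1).
Proof.
elim: N k => [|N IH] k //=. 
rewrite ltnS; case: ifP => // h. by rewrite -IH.
Qed.
Lemma derives_cat w l1 w' l2 w'' : derives w l1 w' -> derives w' l2 w'' -> derives w (l1 ++ l2) w''.
Proof. move=> h; elim: h l2 w'' => // {}w r {}w' ls {}w'' hs _ IH l2 w3 h2 /=; econstructor; eauto. Qed.

Lemma step_ctx p q w r w' : step w r w' -> step (p ++ w ++ q) r (p ++ w' ++ q).
Proof.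
case=> r0 l rh u v hl.
have -> : p ++ (u ++ l ++ v) ++ q = (p ++ u) ++ l ++ (v ++ q) by rewrite -!catA.
have -> : p ++ (u ++ rh ++ v) ++ q = (p ++ u) ++ rh ++ (v ++ q) by rewrite -!catA.
by constructor.
Qed.

Lemma derives_ctx p q w l w' : derives w l w' -> derives (p ++ w ++ q) l (p ++ w' ++ q).
Proof. elim=> [{}w|{}w r {}w' ls w3 hs _ IH]; econstructor; eauto using step_ctx. Qed.

Arguments derives_ctx p q {w l w'}.


Lemma cancel_gen1 p r (c : letter) :
  derives (nseq (r + p) c ++ nseq p (Defs.inv c)) (nseq p Free) (nseq r c).
Proof.
rewrite nseqD -catA.
have := derives_ctx (nseq r c) [::] (cancel_nseq p c). by rewrite !cats0.
Qed.

Lemma cancel_gen2 p r (c : letter) :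
  derives (nseq p c ++ nseq (p + r) (Defs.inv c)) (nseq p Free) (nseq r (Defs.inv c)).
Proof.
rewrite nseqD catA.
have := derives_ctx [::] (nseq r (Defs.inv c)) (cancel_nseq p c). by [].
Qed.

Lemma merge (a b : int) : exists k, derives (xpow a ++ xpow b) (nseq k Free) (xpow (a + b)).
Proof.
case: a => p; case: b => q.
- exists 0%N. have -> : Posz p + Posz q = Posz (p + q) by lia.
  rewrite /= nseqD; constructor.
- case: (leqP q.+1 p) => h.
  + have [r ->] : exists r, p = (r + q.+1)%N by exists (p - q.+1)%N; lia.
    exists q.+1. have -> : Posz (r + q.+1) + Negz q = Posz r by lia.
    exact: (cancel_gen1 q.+1 r X).
  + have [r ->] : exists r, q = (p + r)%N by exists (q - p)%N; lia.
    exists p. have -> : Posz p + Negz (p + r) = Negz r by lia.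
    have := cancel_gen2 p r.+1 X. by rewrite addnS.
- case: (leqP p.+1 q) => h.
  + have [r ->] : exists r, q = (p.+1 + r)%N by exists (q - p.+1)%N; lia.
    exists p.+1. have -> : Negz p + Posz (p.+1 + r) = Posz r by lia.
    exact: (cancel_gen2 p.+1 r Xi).
  + have [r ->] : exists r, p = (r + q)%N by exists (p - q)%N; lia.
    exists q. have -> : Negz (r + q) + Posz q = Negz r by lia.
    have := cancel_gen1 q r.+1 Xi. by rewrite addSn.
- exists 0%N. have -> : Negz p + Negz q = Negz (p + q).+1 by lia.
  rewrite /= -[Xi :: nseq q Xi]/(nseq q.+1 Xi) -nseqD addnS. exact: der_nil.
Qed.

Lemma fe_cong p q u v : fequiv u v -> fequiv (p ++ u ++ q) (p ++ v ++ q).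
Proof.
elim=> {u v}.
- move=> u v a. have -> : p ++ (u ++ [:: a; Defs.inv a] ++ v) ++ q = (p ++ u) ++ [:: a; Defs.inv a] ++ (v ++ q) by rewrite -!catA.
  have -> : p ++ (u ++ v) ++ q = (p ++ u) ++ (v ++ q) by rewrite -!catA.
  exact: fe_free.
- move=> u v. have -> : p ++ (u ++ rel1 ++ v) ++ q = (p ++ u) ++ rel1 ++ (v ++ q) by rewrite -!catA.
  have -> : p ++ (u ++ v) ++ q = (p ++ u) ++ (v ++ q) by rewrite -!catA.
  exact: fe_rel1.
- move=> u v. have -> : p ++ (u ++ rel2 ++ v) ++ q = (p ++ u) ++ rel2 ++ (v ++ q) by rewrite -!catA.
  have -> : p ++ (u ++ v) ++ q = (p ++ u) ++ (v ++ q) by rewrite -!catA.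
  exact: fe_rel2.
- move=> u; exact: fe_refl.
- move=> u v _ IH; exact: fe_sym.
- move=> u v w _ IH1 _ IH2; exact: fe_trans IH1 IH2.
Qed.

#[global] Instance fequiv_equiv : Equivalence fequiv.
Proof. split; [exact: fe_refl | exact: fe_sym | exact: fe_trans]. Qed.

#[global] Instance cat_proper : Proper (fequiv ==> fequiv ==> fequiv) (@cat letter).
Proof.
move=> u u' hu v v' hv.
have h1 := fe_cong [::] v _ _ hu. have h2 := fe_cong u' [::] _ _ hv.
rewrite /= !cats0 in h2. rewrite /= in h1. exact: fe_trans h1 h2.
Qed.

#[global] Instance cons_proper : Proper (eq ==> fequiv ==> fequiv) (@cons letter).
Proof.
move=> a _ <- v v' hv. have := fe_cong [:: a] [::] _ _ hv. by rewrite /= !cats0.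
Qed.

Lemma C1 a q : fequiv (a :: Defs.inv a :: q) q.
Proof. exact: (fe_free [::] q a). Qed.

Lemma C1' a q : fequiv (Defs.inv a :: a :: q) q.
Proof. have := C1 (Defs.inv a) q. by case: a. Qed.

Lemma Cn k c q : fequiv (nseq k c ++ nseq k (Defs.inv c) ++ q) q.
Proof.
elim: k => [|k IH]; first by rewrite /=; reflexivity.
rewrite nseqS' -catA /= C1. exact: IH.
Qed.

Definition zw k : word := locked (nseq k Xi ++ Y :: nseq k X).
Lemma zwE k : zw k = nseq k Xi ++ Y :: nseq k X. Proof. by rewrite /zw -lock. Qed.
Definition zi k : word := locked (nseq k Xi ++ Yi :: nseq k X).
Lemma ziE k : zi k = nseq k Xi ++ Yi :: nseq k X. Proof. by rewrite /zi -lock. Qed.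
Definition cj (w : word) : word := Xi :: w ++ [:: X].

Lemma zwzi k q : fequiv (zw k ++ zi k ++ q) q.
Proof.
rewrite zwE ziE -!catA /= Cn (C1 Y).
have := Cn k Xi q. done.
Qed.

Lemma zizw k q : fequiv (zi k ++ zw k ++ q) q.
Proof.
rewrite zwE ziE -!catA /= Cn (C1 Yi).
have := Cn k Xi q. done.
Qed.

Lemma zwzi0 k : fequiv (zw k ++ zi k) [::].
Proof. have := zwzi k [::]. by rewrite cats0. Qed.
Lemma zizw0 k : fequiv (zi k ++ zw k) [::].
Proof. have := zizw k [::]. by rewrite cats0. Qed.

Lemma cj_cong u v : fequiv u v -> fequiv (cj u) (cj v).
Proof. by move=> h; rewrite /cj h; reflexivity. Qed.

Lemma cj_cat u v : fequiv (cj (u ++ v)) (cj u ++ cj v).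
Proof. rewrite /cj /= -!catA /= (C1 X). reflexivity. Qed.

Lemma cj_zw k : cj (zw k) = zw k.+1.
Proof. by rewrite /cj !zwE /= -catA /= -nseqS'. Qed.

Lemma cj_Y : cj [:: Y] = zw 1.
Proof. by rewrite zwE. Qed.


Lemma tailq u v q : fequiv u v -> fequiv (u ++ q) (v ++ q).
Proof. by move=> h; rewrite h; reflexivity. Qed.

Definition invw (w : word) : word := rev (map Defs.inv w).

Lemma invw_cancel w t : fequiv (w ++ invw w ++ t) t.
Proof.
elim: w t => [|a w IH] t /=; first reflexivity.
rewrite /invw map_cons rev_cons -cats1 -/(invw w) -!catA IH /=. exact: C1.
Qed.

Lemma rot p q : fequiv (p ++ q) [::] -> fequiv (q ++ p) [::].
Proof.
move=> h.
transitivity ((q ++ p) ++ (q ++ invw q ++ [::])).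
  rewrite invw_cancel cats0; reflexivity.
rewrite -!catA (catA p) h /= invw_cancel; reflexivity.
Qed.

Lemma rel1_0 : fequiv rel1 [::].
Proof. exact: (fe_rel1 [::] [::]). Qed.
Lemma rel2_0 : fequiv rel2 [::].
Proof. exact: (fe_rel2 [::] [::]). Qed.

Lemma lemA u k : fequiv (u ++ zi k ++ [:: Yi]) [::] -> fequiv u (Y :: zw k).
Proof.
move=> h.
transitivity ((u ++ zi k ++ [:: Yi]) ++ Y :: zw k); last first.
  rewrite h. reflexivity.
rewrite -!catA /= (C1' Y) zizw0 cats0. reflexivity.
Qed.

Definition R k := fequiv (zw k ++ [:: Y]) (Y :: zw k.+1).

Lemma R1 : R 1.
Proof. apply: lemA. rewrite zwE ziE. exact: (rot (take 7 rel1) (drop 7 rel1) rel1_0). Qed.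
Lemma R2 : R 2.
Proof. apply: lemA. rewrite zwE ziE. exact: (rot (take 9 rel2) (drop 9 rel2) rel2_0). Qed.

Lemma RT k q : R k -> fequiv (zw k ++ Y :: q) (Y :: zw k.+1 ++ q).
Proof. move=> h. have := tailq _ _ q h. by rewrite -catA. Qed.

Lemma RI k q : R k -> fequiv (zi k ++ Y :: q) (Y :: zi k.+1 ++ q).
Proof.
move=> h.
transitivity (zi k ++ Y :: zw k.+1 ++ zi k.+1 ++ q).
  rewrite zwzi. reflexivity.
rewrite -RT // zizw. reflexivity.
Qed.

Lemma CJ a b c d : fequiv (a ++ b) (c ++ d) -> fequiv (cj a ++ cj b) (cj c ++ cj d).
Proof. move=> h. rewrite -!cj_cat. exact: cj_cong. Qed.

Lemma T0 j : R j -> fequiv (zw j.+1 ++ zw 1) (zw 1 ++ zw j.+2).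
Proof. move=> h. have := CJ _ _ _ _ (h : fequiv (zw j ++ [:: Y]) ([:: Y] ++ zw j.+1)). by rewrite !cj_zw cj_Y. Qed.

Lemma TT j q : R j -> fequiv (zw j.+1 ++ zw 1 ++ q) (zw 1 ++ zw j.+2 ++ q).
Proof. move=> h. have := tailq _ _ q (T0 j h). by rewrite -!catA. Qed.

Lemma TT2 j q : R j -> fequiv (zw j.+2 ++ zw 2 ++ q) (zw 2 ++ zw j.+3 ++ q).
Proof. move=> h. have := tailq _ _ q (CJ _ _ _ _ (T0 j h)). by rewrite !cj_zw -!catA. Qed.

Lemma Rstep k : R k.+1 -> R k.+2 -> R k.+3.
Proof.
move=> h1 h2. rewrite /R.
transitivity (zi 1 ++ zw 1 ++ zw k.+3 ++ [:: Y]).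
  rewrite zizw; reflexivity.
rewrite -(TT _ _ h1) (RT 1 _ R1) (RT _ _ h2) (RI 1 _ R1) (TT2 _ _ h1) zizw cats0.
reflexivity.
Qed.

Lemma Rall k : R k.+1.
Proof.
suff : R k.+1 /\ R k.+2 by case.
elim: k => [|k [IH1 IH2]]; first by split; [exact: R1 | exact: R2].
split => //. exact: Rstep.
Qed.

Lemma yrule_equiv e (i : int) : 1 <= i ->
  fequiv (ypow e :: xpow i ++ [:: Y])
         (xpow i ++ [:: Y] ++ xpow (- i - 1) ++ [:: ypow e] ++ xpow (i + 1)).
Proof.
case: i => [k|k] hk; last by [].
have [k' Ek] : exists k', k = k'.+1 by exists k.-1; lia.
have h1 : - Posz k - 1 = Negz k by lia.
have h2 : Posz k + 1 = Posz k.+1 by lia.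
rewrite h1 h2 /=.
case: e => /=.
- transitivity (nseq k X ++ zw k ++ [:: Y]).
    rewrite zwE -!catA /= Cn. reflexivity.
  subst k. rewrite (RT _ [::] (Rall k')) zwE /= -!catA /= cats0. reflexivity.
- transitivity (nseq k X ++ zi k ++ [:: Y]).
    rewrite ziE -!catA /= Cn. reflexivity.
  subst k. rewrite (RI _ [::] (Rall k')) ziE /= -!catA /= cats0. reflexivity.
Qed.

Lemma derives_equiv w ls w' : derives w ls w' -> no_yinv_rule ls -> fequiv w w'.
Proof.
elim=> [{}w|{}w r w1 {}ls w2 hs _ IH] /=; first by reflexivity.
move=> /andP [hr hl]. rewrite -(IH hl).
case: hs hr => r0 l rh u v [].
- move=> a _. exact: fe_free.
- move=> e i hi _. exact: (fe_cong u v _ _ (yrule_equiv e i hi)).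
- by [].
Qed.

Definition isx (c : letter) : bool := (c == X) || (c == Xi).
Definition nx (t : word) : bool := if t is c :: _ then ~~ isx c else true.

Lemma xpow_nseq c : exists n z, xpow c = nseq n z /\ isx z.
Proof. case: c => n; [exists n, X | exists n.+1, Xi]; by []. Qed.

Lemma xpow_isx c : all isx (xpow c).
Proof. have [n [z [-> hz]]] := xpow_nseq c. by rewrite all_nseq hz orbT. Qed.

Lemma block s1 t1 s2 t2 : s1 ++ t1 = s2 ++ t2 -> all isx s1 -> all isx s2 ->
  nx t1 -> nx t2 -> s1 = s2 /\ t1 = t2.
Proof.
elim: s1 s2 => [|a s1 IH] [|b s2] //=.
- move=> E _ /andP [hb _] h1 _. by move: h1; rewrite E /= hb.
- move=> E /andP [ha _] _ _ h2. by move: h2; rewrite -E /= ha.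
- move=> [-> E] /andP [_ h1] /andP [_ h2] n1 n2.
  by have [-> ->] := IH _ E h1 h2 n1 n2.
Qed.

Lemma xpow_inj a b : xpow a = xpow b -> a = b.
Proof.
case: a => p; case: b => q /=.
- by move=> /(congr1 size); rewrite !size_nseq => ->.
- by case: p.
- by case: q.
- by case=> /(congr1 size); rewrite !size_nseq => ->.
Qed.

Lemma split_cat (u t p q : word) : u ++ t = p ++ q ->
  (exists u', u = p ++ u' /\ q = u' ++ t) \/
  (exists p', [/\ p' != [::], p = u ++ p' & t = p' ++ q]).
Proof.
elim: u p => [|a u IH] [|b p] /=.
- by move=> ->; left; exists [::].
- move=> E; right; exists (b :: p); by split.
- move=> <-; left; by exists (a :: u).
- case=> <- /IH [[u' [-> ->]]|[p' [h1 -> ->]]]; [left; exists u' | right; exists p']; by split.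
Qed.

Lemma suffix_nseq (s p' : word) n z y : s ++ p' = nseq n z ++ [:: y] -> p' != [::] ->
  exists j, p' = nseq j z ++ [:: y].
Proof.
case/lastP: p' => [//|p'' y'] E _.
move: E; rewrite cats1 -rcons_cat => /rcons_inj [E ->].
exists (size p''); rewrite cats1; congr rcons.
apply/all_pred1P/allP => c hc.
have : c \in nseq n z by rewrite -E mem_cat hc orbT.
by rewrite mem_nseq => /andP [].
Qed.

Lemma W_rest N a b : W N a b = xpow (a N) ++ (if N is N'.+1 then ypow (b N) :: W N' a b else [::]).
Proof. case: N => [|N]; [by rewrite W0 cats0 | exact: W_S]. Qed.

Definition LC (a : nat -> int) (b : nat -> bool) k :=
  [&& ~~ (b k && (1 <= a k)), ~~ (~~ b k && (2 <= a k)) & ((a k == 0) ==> (b k.+1 == b k))].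

Lemma step_inv w r w' : step w r w' -> exists u l v rh, w = u ++ l ++ v /\ rule_lr r l rh.
Proof. case=> r0 l rh u v hl. by exists u, l, v, rh. Qed.

Lemma no_step_xpow c r w' : ~ step (xpow c) r w'.
Proof.
move=> /step_inv [u [l [v [rh [E hl]]]]].
have [n [z [Ez hz]]] := xpow_nseq c.
have mem : forall x, x \in l -> x == z.
  move=> x hx. have : x \in nseq n z by rewrite -Ez E !mem_cat hx orbT.
  by rewrite mem_nseq => /andP [].
case: hl mem => [a|e i _|e i _] mem.
- have /eqP h1 := mem a (mem_head _ _).
  have /eqP h2 : Defs.inv a == z by apply: mem; rewrite inE mem_head orbT.
  by move: h2 hz; rewrite -h1; case: (a).
- have /eqP h1 := mem (ypow e) (mem_head _ _). by move: hz; rewrite -h1; case: (e).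
- have /eqP h1 := mem (ypow e) (mem_head _ _). by move: hz; rewrite -h1; case: (e).
Qed.

Lemma nx_rest N a b : nx (if N is N'.+1 then ypow (b N) :: W N' a b else [::]).
Proof. by case: N => //= N; case: (b N.+1). Qed.

Lemma irr_W N a b : (forall k, (0 < k < N)%N -> LC a b k) -> irreducible (W N a b).
Proof.
elim: N => [|N IH] H r w'; first by rewrite W0; exact: no_step_xpow.
move=> /step_inv [u [l [v [rh [E hl]]]]].
move: E; rewrite W_S -cat1s catA => /esym /split_cat [[u' [Eu EW]]|[p' [hp' Ep Elv]]].
  apply: (IH _ r (u' ++ rh ++ v)); last by rewrite EW; exact: step_intro.
  move=> k hk; apply: H; lia.
have [n [z [Ez hz]]] := xpow_nseq (a N.+1).
move: Ep; rewrite Ez => /esym /suffix_nseq /(_ hp') [j Ep'].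
move: Elv; rewrite Ep' -catA /=; clear Ep' Ez.
have HN := H N.
case: hl => [c|e i hi|e i hi].
- case: j => [|[|j]] /=.
  + case=> Ec E2.
    have := W_rest N a b. rewrite -E2 -[_ :: v]cat0s => /block.
    case/(_ isT (xpow_isx _) _ (nx_rest N a b)).
      by rewrite /= Ec; case: (b N.+1).
    move=> /esym h0 Er.
    have h0' : a N = 0 by apply: xpow_inj; rewrite h0.
    clear E2 h0; case: N H IH HN h0' Er Ec => [//|N] H IH HN h0' /= [] E3 Ec.
    have : LC a b N.+1 by apply: H; lia.
    rewrite /LC h0' /= => /and3P [_ _ /eqP hb] Ec'.
    by move: E3; rewrite Ec' hb; case: (b N.+1).
  + case=> Ecz E2; move: hz E2; rewrite -Ecz; case: (c) => //= _; by case: (b N.+1).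
  + case=> Ecz E2 _; move: hz E2; rewrite -Ecz; by case: (c).
- case: j => [|j] /=; last by case=> Ez'; move: hz; rewrite -Ez'; case: (e).
  case=> _ E2.
  have := W_rest N a b. rewrite -E2 -catA => /block.
  case/(_ (xpow_isx _) (xpow_isx _) isT (nx_rest N a b)) => /xpow_inj ha Er.
  clear E2; case: N H IH HN ha Er => [//|N] H IH HN ha /= [] E3.
  have : LC a b N.+1 by apply: H; lia.
  have hb : b N.+1 = true by move: E3; case: (b N.+1).
  by rewrite /LC -ha hi hb.
- case: j => [|j] /=; last by case=> Ez'; move: hz; rewrite -Ez'; case: (e).
  case=> _ E2.
  have := W_rest N a b. rewrite -E2 -catA => /block.
  case/(_ (xpow_isx _) (xpow_isx _) isT (nx_rest N a b)) => /xpow_inj ha Er.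
  clear E2; case: N H IH HN ha Er => [//|N] H IH HN ha /= [] E3.
  have : LC a b N.+1 by apply: H; lia.
  have hb : b N.+1 = false by move: E3; case: (b N.+1).
  rewrite /LC -ha hb /=. 
  have -> : (2 <= i + 1) = true by lia.
  by [].
Qed.

Lemma W_mid N k a b : (k.+1 < N)%N ->
  W N a b = (PreW N k.+2 a b ++ xpow (a k.+2)) ++ (ypow (b k.+2) :: xpow (a k.+1) ++ [:: ypow (b k.+1)]) ++ W k a b.
Proof.
move=> hk. rewrite (@W_pre N k.+1) ?(@PreW_step N k.+1) //; last lia.
by rewrite W_S -!catA /= -!catA.
Qed.

Lemma LC_of_irr N a b k : irreducible (W N a b) -> (0 < k < N)%N -> LC a b k.
Proof.
move=> hirr /andP [hk0 hkN].
case: k hk0 hkN => // k _ hkN.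
have E := W_mid _ _ a b hkN.
rewrite /LC; apply/and3P; split.
- apply/negP => /andP [hb ha].
  have hl := lr_y (b k.+2) ha.
  apply: (hirr (YRule (a k.+1))). rewrite E hb. exact: step_intro hl.
- apply/negP => /andP [hb ha].
  have hl := lr_yinv (b k.+2) (_ : 1 <= a k.+1 - 1).
  rewrite subrK in hl.
  apply: (hirr (YinvRule (a k.+1 - 1))). rewrite E (negbTE hb). apply: step_intro; apply: hl. lia.
- apply/implyP => /eqP ha. case: eqVneq => // hne; exfalso.
  have hl := lr_free (ypow (b k.+2)).
  apply: (hirr Free). rewrite E ha /=.
  have -> : ypow (b k.+1) = Defs.inv (ypow (b k.+2)).
    by move: hne; case: (b k.+1); case: (b k.+2).
  exact: step_intro hl.
Qed.

Lemma head_filter_iota0 (P : pred nat) a l d :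
  (head d [seq k <- iota a l | P k] = d /\ forall j, (a <= j < a + l)%N -> ~~ P j) \/
  [/\ (a <= head d [seq k <- iota a l | P k] < a + l)%N, P (head d [seq k <- iota a l | P k])
    & forall j, (a <= j < head d [seq k <- iota a l | P k])%N -> ~~ P j].
Proof.
elim: l a => [|l IH] a /=.
  left; split => // j; lia.
case: ifP => hP /=.
  right; split => //; [lia | move=> j; lia].
case: (IH a.+1) => [[-> H]|[h1 h2 h3]].
  left; split => // j hj. case: (ltngtP a j) => hj'.
  - apply: H; lia.
  - lia.
  - by rewrite -hj' hP.
right; split => //; first lia.
move=> j hj. case: (ltngtP a j) => hj'.
- apply: h3; lia.
- lia.
- by rewrite -hj' hP.
Qed.

Lemma head_filter_iota (P : pred nat) a l d h : h = head d [seq k <- iota a l | P k] ->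
  (h = d /\ forall j, (a <= j < a + l)%N -> ~~ P j) \/
  [/\ (a <= h < a + l)%N, P h & forall j, (a <= j < h)%N -> ~~ P j].
Proof. move=> ->; exact: head_filter_iota0. Qed.

Lemma mindex_spec n i :
  [/\ (mindex n i <= n)%N, forall j, (j < mindex n i)%N -> 0 < psum i j
    & (mindex n i < n)%N -> psum i (mindex n i) <= 0].
Proof.
case: (head_filter_iota (fun k => psum i k <= 0) 0 n.+1 n (mindex n i) erefl) => [[-> H]|[h1 h2 h3]].
  split => //; last by rewrite ltnn.
  move=> j hj. have hh : ~~ (psum i j <= 0) by apply: H; lia. lia.
split; [lia | | by []].
move=> j hj. have hh : ~~ (psum i j <= 0) by apply: h3; lia. lia.
Qed.
Lemma psum0 i : psum i 0 = i 0%N.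
Proof. by rewrite /psum big_nat1. Qed.

Lemma psumS i k : psum i k.+1 = psum i k + i k.+1.
Proof. by rewrite /psum big_nat_recr. Qed.

Lemma yrule_sizes_cat l1 l2 : yrule_sizes (l1 ++ l2) = yrule_sizes l1 ++ yrule_sizes l2.
Proof. by rewrite /yrule_sizes pmap_cat. Qed.
Lemma no_yinv_cat l1 l2 : no_yinv_rule (l1 ++ l2) = no_yinv_rule l1 && no_yinv_rule l2.
Proof. by rewrite /no_yinv_rule all_cat. Qed.
Lemma yrule_sizes_free k : yrule_sizes (nseq k Free) = [::].
Proof. by elim: k. Qed.
Lemma no_yinv_free k : no_yinv_rule (nseq k Free).
Proof. by elim: k. Qed.

Lemma yrule_sizes_Y s l : yrule_sizes (YRule s :: l) = s :: yrule_sizes l.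
Proof. by []. Qed.
Lemma no_yinv_Y s l : no_yinv_rule (YRule s :: l) = no_yinv_rule l.
Proof. by []. Qed.

Lemma ystep n i eps k d rest : (k < n)%N -> 0 < psum i k ->
  exists ls, [/\ derives (PreW n k i eps ++ xpow (psum i k) ++ Y :: xpow d ++ rest) ls
     (PreW n k.+1 i eps ++ xpow (psum i k.+1) ++ Y :: xpow (- psum i k - 1)
        ++ ypow (eps k.+1) :: xpow (psum i k + 1 + d) ++ rest),
     no_yinv_rule ls & yrule_sizes ls = [:: psum i k]].
Proof.
move=> hk hs.
rewrite (PreW_step _ _ i eps hk) psumS (addrC _ (i k.+1)).
move: (psum i k) hs => s hs.
set P' := PreW n k.+1 i eps. set e := eps k.+1.
have st := step_intro (P' ++ xpow (i k.+1)) (xpow d ++ rest) (lr_y e hs).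
have [q1 m1] := merge (i k.+1) s.
have d1 := derives_ctx P' ([:: Y] ++ xpow (- s - 1) ++ [:: ypow e] ++ xpow (s + 1) ++ xpow d ++ rest) m1.
have [q2 m2] := merge (s + 1) d.
have d2 := derives_ctx (P' ++ xpow (i k.+1 + s) ++ [:: Y] ++ xpow (- s - 1) ++ [:: ypow e]) rest m2.
exists (YRule s :: nseq q1 Free ++ nseq q2 Free); split.
- move: st d1 d2; rewrite -!catA /= => st d1 d2.
  have E : (xpow s ++ [:: Y]) ++ xpow d ++ rest = xpow s ++ Y :: xpow d ++ rest by rewrite -catA.
  rewrite E in st.
  apply: der_cons st _. exact: derives_cat d1 d2.
- by rewrite no_yinv_Y no_yinv_cat !no_yinv_free.
- by rewrite yrule_sizes_Y yrule_sizes_cat !yrule_sizes_free.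
Qed.

Definition ip (i : nat -> int) j := if j == 0%N then i 0%N + 1 else i j.
Definition state n i eps k := PreW n k i eps ++ xpow (psum i k) ++ Y ::
  xpow (- psum i k.-1 - 1) ++ ypow (eps k) :: W k.-1 (ip i) eps.

Lemma states n i eps k : (1 <= k)%N -> (k <= n)%N -> (forall j, (j < k)%N -> 0 < psum i j) ->
  exists ls, [/\ derives (W n i eps ++ [:: Y]) ls (state n i eps k), no_yinv_rule ls
     & yrule_sizes ls = [seq psum i j | j <- iota 0 k]].
Proof.
elim: k => [//|k IH] _ hkn hpos.
case: k IH hkn hpos => [|k] IH hkn hpos.
  have [ls [d1 h1 h2]] := ystep n i eps 0 0 [::] hkn (hpos 0%N isT).
  exists ls; split => //.
  move: d1; rewrite /state /= W0 /ip /= addr0 cats0.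
  by rewrite (W_pre _ _ i eps (leq0n n)) W0 psum0 -catA.
have [ls1 [d1 h1 h2]] := IH isT (ltnW hkn) (fun j hj => hpos j (ltnW hj)).
have [ls2 [d2 h3 h4]] := ystep n i eps k.+1 (- psum i k - 1) (ypow (eps k.+1) :: W k (ip i) eps) hkn (hpos k.+1 (ltnSn _)).
exists (ls1 ++ ls2); split.
- apply: derives_cat d1 _. move: d2. rewrite /state /=.
  have -> : psum i k.+1 + 1 + (- psum i k - 1) = ip i k.+1 by rewrite /ip /= psumS; lia.
  by rewrite -W_S.
- by rewrite no_yinv_cat h1 h3.
- by rewrite yrule_sizes_cat h2 h4 -(addn1 k.+1) iotaD map_cat.
Qed.

Section Vals.
Variables (n : nat) (i : nat -> int) (eps : nat -> bool).
Local Notation m := (mindex n i).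

Lemma a1_0 : a1 n i 0 = i 0%N + 1. Proof. by []. Qed.
Lemma a1_lt k : (0 < k < m)%N -> a1 n i k = i k.
Proof. rewrite /a1 /= => hk. have -> : (k == 0)%N = false by lia. by rewrite (_ : (k < m)%N = true) //; lia. Qed.
Lemma a1_m : (0 < m)%N -> a1 n i m = - psum i m.-1 - 1.
Proof. rewrite /a1 /= => hk. have -> : (m == 0)%N = false by lia. by rewrite ltnn eqxx. Qed.
Lemma a1_m1 : a1 n i m.+1 = psum i m.
Proof. rewrite /a1 /=. have -> : (m.+1 < m)%N = false by lia. have -> : (m.+1 == m)%N = false by lia. by rewrite eqxx. Qed.
Lemma a1_gt k : (m.+1 < k)%N -> a1 n i k = i k.-1.
Proof.
rewrite /a1 /= => hk. have -> : (k == 0)%N = false by lia. have -> : (k < m)%N = false by lia.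
have -> : (k == m)%N = false by lia. by have -> : (k == m.+1)%N = false by lia.
Qed.
Lemma b1_le k : (k <= m)%N -> b1 n i eps k = eps k.
Proof. by rewrite /b1 /= => ->. Qed.
Lemma b1_m1 : b1 n i eps m.+1 = true.
Proof. by rewrite /b1 /= ltnn eqxx. Qed.
Lemma b1_gt k : (m.+1 < k)%N -> b1 n i eps k = eps k.-1.
Proof. rewrite /b1 /= => hk. have -> : (k <= m)%N = false by lia. by have -> : (k == m.+1)%N = false by lia. Qed.

Lemma a2_0 : a2 n i 0 = i 0%N + 1. Proof. by []. Qed.
Lemma a2_lt k : (0 < k < m)%N -> a2 n i k = i k.
Proof. rewrite /a2 /= => hk. have -> : (k == 0)%N = false by lia. by rewrite (_ : (k < m)%N = true) //; lia. Qed.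
Lemma a2_m : (0 < m)%N -> a2 n i m = i m.+1 + i m - 1.
Proof. rewrite /a2 /= => hk. have -> : (m == 0)%N = false by lia. by rewrite ltnn eqxx. Qed.
Lemma a2_gt k : (m < k)%N -> a2 n i k = i k.+1.
Proof.
rewrite /a2 /= => hk. have -> : (k == 0)%N = false by lia. have -> : (k < m)%N = false by lia.
by have -> : (k == m)%N = false by lia.
Qed.
Lemma b2_le k : (k <= m)%N -> b2 n i eps k = eps k.
Proof. by rewrite /b2 /= => ->. Qed.
Lemma b2_gt k : (m < k)%N -> b2 n i eps k = eps k.+1.
Proof. rewrite /b2 /= => hk. by have -> : (k <= m)%N = false by lia. Qed.
End Vals.

Lemma LC_eq a b a' b' k : a k = a' k -> b k = b' k -> b k.+1 = b' k.+1 -> LC a b k = LC a' b' k.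
Proof. by rewrite /LC => -> -> ->. Qed.

Lemma LC_neg a b k : a k < 0 -> LC a b k.
Proof.
move=> h; rewrite /LC.
have -> : (1 <= a k) = false by lia. have -> : (2 <= a k) = false by lia.
have -> : (a k == 0) = false by lia. by rewrite !andbF.
Qed.

Lemma LC_nonpos a b k : a k <= 0 -> (a k = 0 -> b k.+1 = b k) -> LC a b k.
Proof.
move=> h h0; rewrite /LC.
have -> : (1 <= a k) = false by lia. have -> : (2 <= a k) = false by lia.
rewrite !andbF /=. apply/implyP => /eqP /h0 ->. by rewrite eqxx.
Qed.

Definition ash (i : nat -> int) k := if k is k'.+1 then i k' else 0.
Definition bsh (eps : nat -> bool) k := if k is k'.+1 then (if k' is 0 then true else eps k') else true.

Lemma W_shift n i eps : W n.+1 (ash i) (bsh eps) = W n i eps ++ [:: Y].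
Proof.
rewrite (@W_pre n.+1 1) // PreW_shift (@W_pre n 0) // W_S !W0 /= -catA.
congr (_ ++ _).
apply: PreW_ext => j hj /=. by case: j hj.
Qed.

Lemma edge_irr g : irreducible (g ++ [:: Y]) -> edge_on_T g Y.
Proof. move=> h. exists (g ++ [:: Y]), g, Y, [::]. split; first exact: h. split => //. left; split => //. reflexivity. Qed.

Lemma LC_eq2 a b a' b' k k' : a k = a' k' -> b k = b' k' -> b k.+1 = b' k'.+1 -> LC a b k = LC a' b' k'.
Proof. by rewrite /LC => -> -> ->. Qed.

Theorem lemma3p1 (gamma : word) (n : nat) (i : nat -> int) (eps : nat -> bool) :
  irreducible gamma ->
  ~ edge_on_T gamma Y ->
  gamma = W n i eps ->
  [/\ (1 <= n)%N, 1 <= i 0%N, (1 <= mindex n i)%N,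
      (mindex n i == n) || (psum i (mindex n i) != 0) || eps (mindex n i).+1 ->
        is_nf (gamma ++ [:: Y]) (W n.+1 (a1 n i) (b1 n i eps)) /\
        exists ls, [/\ derives (gamma ++ [:: Y]) ls (W n.+1 (a1 n i) (b1 n i eps)),
                       no_yinv_rule ls &
                       yrule_sizes ls = [seq psum i k | k <- iota 0 (mindex n i)]]
    & (mindex n i < n)%N && (psum i (mindex n i) == 0) && ~~ eps (mindex n i).+1 ->
        is_nf (gamma ++ [:: Y]) (W n.-1 (a2 n i) (b2 n i eps)) /\
        exists ls, [/\ derives (gamma ++ [:: Y]) ls (W n.-1 (a2 n i) (b2 n i eps)),
                       no_yinv_rule ls &
                       yrule_sizes ls = [seq psum i k | k <- iota 0 (mindex n i)]]].
Proof.
move=> hirr hT Eg; subst gamma.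
have LCg : forall k, (0 < k < n)%N -> LC i eps k by move=> k hk; exact: LC_of_irr hirr hk.
have hn : (1 <= n)%N.
  case: n hirr hT LCg => // hirr hT LCg. exfalso; apply: hT; apply: edge_irr.
  rewrite -W_shift. apply: irr_W => k; lia.
have hi0 : 1 <= i 0%N.
  case: (lerP 1 (i 0%N)) => // hlt. exfalso; apply: hT.
  case: (boolP ((i 0%N == 0) && ~~ eps 1%N)) => [/andP [/eqP h0 he]|hne].
  - have E : W n i eps = (PreW n 1 i eps ++ xpow (i 1%N)) ++ [:: Yi].
      by rewrite (@W_pre n 1) // W_S W0 h0 /= (negbTE he) -catA.
    exists (W n i eps), (PreW n 1 i eps ++ xpow (i 1%N)), Yi, [::]. split => //.
    split; first exact: E.
    right; split => //. rewrite E -catA /=.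
    have := fe_free (PreW n 1 i eps ++ xpow (i 1%N)) [::] Yi. rewrite !cats0 => h.
    symmetry. exact: h.
  - apply: edge_irr; rewrite -W_shift; apply: irr_W => k hk.
    case: k hk => [//|[|k]] hk.
    + apply: LC_nonpos => /=; first lia.
      move=> h0; move: hne; rewrite h0 eqxx /=; by case: (eps 1%N).
    + have : LC i eps k.+1 by apply: LCg; lia.
      by [].
have [hmn hpos hmle] := mindex_spec n i.
have hm1 : (1 <= mindex n i)%N.
  case E: (mindex n i) => [|//]. exfalso. have := hmle. rewrite E psum0 => /(_ hn). lia.
have [ls [hd hny hsz]] := states n i eps (mindex n i) hm1 hmn hpos.
have Em : mindex n i = (mindex n i).-1.+1 by lia.
have hpm := hpos (mindex n i).-1 ltac:(lia).
split => //.
- move=> hc.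
  have EW : W n.+1 (a1 n i) (b1 n i eps) = state n i eps (mindex n i).
    rewrite (@W_pre n.+1 (mindex n i).+1) ?ltnS // PreW_shift W_S a1_m1 b1_m1.
    have EWm : W (mindex n i) (a1 n i) (b1 n i eps) = W (mindex n i).-1.+1 (a1 n i) (b1 n i eps) by rewrite -Em.
    rewrite EWm W_S -Em a1_m // b1_le //.
    rewrite /state. congr (_ ++ _ ++ _ :: _ ++ _ :: _).
      apply: PreW_ext => j hj. rewrite a1_gt ?b1_gt //; lia.
    apply: W_ext => j hj. rewrite b1_le; last lia. split => //.
    case: j hj => [|j] hj; first by rewrite a1_0.
    rewrite a1_lt //; lia.
  have hirr1 : irreducible (W n.+1 (a1 n i) (b1 n i eps)).
    apply: irr_W => k hk.
    case: (ltngtP k (mindex n i)) => hkm.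
    + rewrite (@LC_eq _ _ i eps); first (apply: LCg; lia).
      * rewrite a1_lt //; lia.
      * by rewrite b1_le //; lia.
      * by rewrite b1_le //; lia.
    + case: (eqVneq k (mindex n i).+1) => hk1.
      * subst k. apply: LC_nonpos; rewrite a1_m1.
          apply: hmle; lia.
        move=> h0. rewrite b1_gt // b1_m1 /=.
        move: hc; rewrite h0 eqxx orbF.
        have -> : (mindex n i == n) = false by lia.
        by [].
      * rewrite (@LC_eq2 _ _ i eps k k.-1); first (apply: LCg; lia).
        - rewrite a1_gt //; lia.
        - rewrite b1_gt //; lia.
        - rewrite b1_gt /=; last lia. congr eps; lia.
    + subst k. apply: LC_neg. rewrite a1_m //. lia.
  split.
    split => //. rewrite EW. symmetry. exact: derives_equiv hd hny.
  exists ls; split => //. by rewrite EW.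
- move=> /andP [/andP [hlt /eqP hz] he].
  have hm1n : ((mindex n i).+1 <= n)%N by lia.
  have Hst := PreW_step n (mindex n i) i eps hlt.
  set P := PreW n (mindex n i).+1 i eps.
  set R := W (mindex n i).-1 (ip i) eps.
  set c := - psum i (mindex n i).-1 - 1.
  have Est : state n i eps (mindex n i) = (P ++ xpow (i (mindex n i).+1)) ++ [:: Yi; Y] ++ xpow c ++ ypow (eps (mindex n i)) :: R.
    by rewrite /state hz Hst (negbTE he) /= -!catA.
  rewrite Est in hd.
  have st := step_intro (P ++ xpow (i (mindex n i).+1)) (xpow c ++ ypow (eps (mindex n i)) :: R) (lr_free Yi).
  have [q m2] := merge (i (mindex n i).+1) c.
  have d2 := derives_ctx P (ypow (eps (mindex n i)) :: R) m2.
  have EW : W n.-1 (a2 n i) (b2 n i eps) = P ++ xpow (i (mindex n i).+1 + c) ++ ypow (eps (mindex n i)) :: R.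
    have En : n = n.-1.+1 by lia.
    rewrite (@W_pre n.-1 (mindex n i)); last lia.
    have EP : P = PreW n.-1 (mindex n i) (fun j => i j.+1) (fun j => eps j.+1).
      have := PreW_shift n.-1 (mindex n i) i eps. by rewrite -En.
    rewrite EP.
    have EWm : W (mindex n i) (a2 n i) (b2 n i eps) = W (mindex n i).-1.+1 (a2 n i) (b2 n i eps) by rewrite -Em.
    rewrite EWm W_S -Em a2_m // b2_le //.
    congr (_ ++ _ ++ _ :: _).
    + apply: PreW_ext => j hj. rewrite a2_gt ?b2_gt //; lia.
    + congr xpow. rewrite /c. have := psumS i (mindex n i).-1. rewrite -Em hz. lia.
    + apply: W_ext => j hj. rewrite b2_le; last lia. split => //.
      case: j hj => [|j] hj; first by rewrite a2_0.
      rewrite a2_lt //; lia.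
  have hirr2 : irreducible (W n.-1 (a2 n i) (b2 n i eps)).
    apply: irr_W => k hk.
    case: (ltngtP k (mindex n i)) => hkm.
    + rewrite (@LC_eq _ _ i eps); first (apply: LCg; lia).
      * rewrite a2_lt //; lia.
      * by rewrite b2_le //; lia.
      * by rewrite b2_le //; lia.
    + rewrite (@LC_eq2 _ _ i eps k k.+1); first (apply: LCg; lia).
      * rewrite a2_gt //; lia.
      * rewrite b2_gt //; lia.
      * rewrite b2_gt //; lia.
    + subst k. apply: LC_neg. rewrite a2_m //.
      have := LCg (mindex n i).+1 ltac:(lia). rewrite /LC (negbTE he) /= => /andP [h2 _].
      have := psumS i (mindex n i).-1. rewrite -Em hz. lia.
  have dall : derives (W n i eps ++ [:: Y]) (ls ++ Free :: nseq q Free) (W n.-1 (a2 n i) (b2 n i eps)).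
    apply: derives_cat hd _. rewrite EW.
    have E2 : P ++ (xpow (i (mindex n i).+1) ++ xpow c) ++ ypow (eps (mindex n i)) :: R
      = (P ++ xpow (i (mindex n i).+1)) ++ xpow c ++ ypow (eps (mindex n i)) :: R by rewrite !catA.
    rewrite E2 -catA in d2. rewrite -catA. rewrite /= -!catA in st.
    exact: der_cons st d2.
  split.
    split => //. symmetry. apply: derives_equiv dall _.
    by rewrite no_yinv_cat hny /=; exact: no_yinv_free.
  exists (ls ++ Free :: nseq q Free); split => //.
    by rewrite no_yinv_cat hny /=; exact: no_yinv_free.
  rewrite yrule_sizes_cat hsz (_ : yrule_sizes (Free :: nseq q Free) = [::]) ?cats0 //. exact: yrule_sizes_free.
Qed.
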